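(* Let $p$ be an odd prime, let $q\in\mathbb{C}_p$ with $|q-1|_p<p^{-1/(p-1)}$, let $n\ge 0$ be an integer and let $x\in\mathbb{Z}_p$. Then the limit $$K_{n,q}(x):=\int_{\mathbb{Z}_p}[x+y]_q^n\,d\mu_{-q}(y)=\lim_{N\to\infty}\frac{1}{[p^N]_{-q}}\sum_{y=0}^{p^N-1}[x+y]_q^n(-q)^y$$ exists and $$K_{n,q}(x)=[2]_q\left(\frac{1}{1-q}\right)^n\sum_{k=0}^n\binom nk(-1)^k q^{xk}\frac{1}{1+q^{k+1}}.$$ In particular, $K_{n,q}:=K_{n,q}(0)=\int_{\mathbb{Z}_p}[x]_q^n\,d\mu_{-q}(x)=[2]_q\left(\frac{1}{1-q}\right)^n\sum_{l=0}^n\binom nl(-1)^l\frac{1}{1+q^{l+1}}$.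
   Context: $\mathbb{C}_p$ is the $p$-adic completion of an algebraic closure of $\mathbb{Q}_p$, with $|p|_p=1/p$. For $q\in\mathbb{C}_p$ with $|q-1|_p<p^{-1/(p-1)}$ one sets $q^x=\exp(x\log q)$ for $|x|_p\le 1$, and $[x]_q=\frac{1-q^x}{1-q}$. For an integer $M\ge 0$, $[M]_{-q}=\frac{1-(-q)^M}{1+q}$. The ($q$-Volkenborn, ''fermionic'') integral with respect to $\mu_{-q}$ of a function $g$ on $\mathbb{Z}_p$ is defined by $\int_{\mathbb{Z}_p}g(y)\,d\mu_{-q}(y)=\lim_{N\to\infty}\frac{1}{[p^N]_{-q}}\sum_{y=0}^{p^N-1}g(y)(-q)^y$. *)

(* Defs.v *)
From HB Require Import structures.
From Stdlib Require Import ClassicalEpsilon.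
From mathcomp Require Import all_boot all_order all_algebra.
From mathcomp Require Import reals.
Unset Printing Implicit Defensive.
Import Order.TTheory GRing.Theory Num.Theory.
Local Open Scope ring_scope.

Section PAdic.
Context {R : realType} {K : fieldType} (abs : K -> R).

Definition converges (u : nat -> K) (L : K) : Prop :=
  forall e : R, 0 < e -> exists N : nat, forall m, (N <= m)%N -> abs (u m - L) < e.

Definition cauchy_seq (u : nat -> K) : Prop :=
  forall e : R, 0 < e -> exists N : nat, forall m k, (N <= m)%N -> (N <= k)%N ->
    abs (u m - u k) < e.

(* the limit (chosen by classical choice; meaningful when the sequence converges) *)
Definition klim (u : nat -> K) : K :=
  epsilon (inhabits 0) (fun L => converges u L).

(* x belongs to the closure of the integers, i.e. to Z_p inside K *)
Definition is_padic_int (x : K) : Prop :=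
  forall e : R, 0 < e -> exists z : int, abs (x - z%:~R) < e.

Definition pexp (z : K) : K :=
  klim (fun N => \sum_(i < N) z ^+ i / (i`!)%:R).
Definition plog (q : K) : K :=
  klim (fun N => \sum_(i < N) (-1) ^+ i * (q - 1) ^+ i.+1 / (i.+1)%:R).

Definition qpow (q x : K) : K := pexp (x * plog q).

Definition qbr (q x : K) : K := (1 - qpow q x) / (1 - q).

Definition mqbr (q : K) (M : nat) : K := (1 - (- q) ^+ M) / (1 + q).

Definition fsum (p : nat) (q : K) (n : nat) (x : K) (N : nat) : K :=
  (mqbr q (p ^ N))^-1 *
  \sum_(y < p ^ N) (qbr q (x + y%:R)) ^+ n * (- q) ^+ y.

End PAdic.

(* Main.v *)
Require Import Defs.
From HB Require Import structures.
From Stdlib Require Import ClassicalEpsilon.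
From mathcomp Require Import all_boot all_order all_algebra.
From mathcomp Require Import reals.
From mathcomp Require Import ring lra zify.
Import Order.TTheory GRing.Theory Num.Theory.
Local Open Scope ring_scope.

Lemma geo_small (R : realType) (t : R) : 0 <= t -> t < 1 ->
  forall e : R, 0 < e -> exists N, forall k, (N <= k)%N -> t ^+ k < e.
Proof.
move=> t0 t1 e he.
have [->|tn0] := eqVneq t 0.
  by exists 1%N => k hk; rewrite expr0n; case: k hk.
have tpos : 0 < t by rewrite lt_neqAle eq_sym tn0 t0.
set d := t^-1 - 1.
have dpos : 0 < d by rewrite /d subr_gt0 invf_gt1.
have bern : forall n, 1 + n%:R * d <= (1 + d) ^+ n.
  elim => [|n IH]; first by rewrite mul0r addr0 expr0.
  rewrite exprS -natr1 mulrDl mul1r.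
  have h0 : 0 <= n%:R * d by rewrite mulr_ge0 // ltW.
  have h1 : 0 <= (1 + d) ^+ n by rewrite exprn_ge0 // addr_ge0 // ltW.
  nra.
set N := Num.truncn ((e * d)^-1).
exists N.+1 => k hk.
have hkN : (N.+1%:R : R) <= k%:R by rewrite ler_nat.
have hN := truncnS_gt ((e * d)^-1); rewrite -/N in hN.
have htk : t ^+ k = ((1 + d) ^+ k)^-1 by rewrite /d addrC subrK exprVn invrK.
rewrite htk.
have hk0 : 0 < (k%:R : R) by rewrite ltr0n; apply: leq_trans hk.
have hkd : 0 < k%:R * d by rewrite mulr_gt0.
have hb := bern k.
have hbp : 0 < (1 + d) ^+ k by lra.
have step1 : ((1 + d) ^+ k)^-1 <= (k%:R * d)^-1.
  rewrite lef_pV2 ?posrE //; lra.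
apply: le_lt_trans step1 _.
have hed : 0 < e * d by rewrite mulr_gt0.
have hN' : (e * d)^-1 < k%:R by apply: lt_le_trans hN hkN.
move: hN'; rewrite -div1r ltr_pdivrMr // => hN'.
rewrite -div1r ltr_pdivrMr //.
have -> : e * (k%:R * d) = k%:R * (e * d) by ring.
exact: hN'.
Qed.

Section Basic.
Variables (R : realType) (K : closedFieldType) (abs : K -> R) (p : nat).
Hypothesis hp : prime p.
Hypothesis abs0 : forall x : K, abs x = 0 <-> x = 0.
Hypothesis absM : forall x y : K, abs (x * y) = abs x * abs y.
Hypothesis absD : forall x y : K, abs (x + y) <= Num.max (abs x) (abs y).
Hypothesis absp : abs (p%:R) = (p%:R)^-1.
Hypothesis hcomplete : forall u : nat -> K, cauchy_seq abs u -> exists L, converges abs u L.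

Lemma abs_ge0 x : 0 <= abs x.
Proof.
have [y hy] := @solve_monicpoly K 2 (fun i => if i == 0%N then x else 0) isT.
move: hy; rewrite big_ord_recr big_ord1 /= mul0r addr0 expr0 mulr1 => hy.
by rewrite -hy expr2 absM -expr2 sqr_ge0.
Qed.

Lemma abs_0 : abs 0 = 0. Proof. by apply/abs0. Qed.

Lemma abs1 : abs 1 = 1.
Proof.
have h := absM 1 1; rewrite mulr1 in h.
have hn : abs 1 != 0 by apply/eqP => /abs0 /eqP; rewrite oner_eq0.
apply: (mulfI hn); by rewrite mulr1 -h.
Qed.

Lemma absN1 : abs (-1) = 1.
Proof.
have h := absM (-1) (-1); rewrite mulrNN mulr1 abs1 in h.
have h0 := abs_ge0 (-1).
have : (abs (-1) - 1) * (abs (-1) + 1) = 0 by rewrite -subr_sqr expr1n expr2 -h subrr.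
move/eqP; rewrite mulf_eq0 => /orP [/eqP|]; first by move/eqP; rewrite subr_eq0 => /eqP.
move=> /eqP h1; exfalso; have : 0 < abs (-1) + 1 by rewrite ltr_wpDl.
by rewrite h1 ltxx.
Qed.

Lemma absN x : abs (- x) = abs x.
Proof. by rewrite -mulN1r absM absN1 mul1r. Qed.

Lemma absB x y : abs (x - y) = abs (y - x).
Proof. by rewrite -absN opprB. Qed.

Lemma absX x n : abs (x ^+ n) = abs x ^+ n.
Proof. elim: n => [|n IH]; by rewrite ?expr0 ?abs1 // !exprS absM IH. Qed.

Lemma absV x : abs (x^-1) = (abs x)^-1.
Proof.
have [->|hx] := eqVneq x 0; first by rewrite invr0 abs_0 invr0.
have h := absM x x^-1; rewrite mulfV // abs1 in h.
have hn : abs x != 0 by apply/eqP => /abs0 /eqP; rewrite (negbTE hx).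
by rewrite -[RHS]mulr1 h mulrA mulVf // mul1r.
Qed.

Lemma absDle x y c : abs x <= c -> abs y <= c -> abs (x + y) <= c.
Proof. move=> h1 h2; apply: le_trans (absD x y) _; by rewrite ge_max h1 h2. Qed.

Lemma absDlt x y c : abs x < c -> abs y < c -> abs (x + y) < c.
Proof. move=> h1 h2; apply: le_lt_trans (absD x y) _; by rewrite gt_max h1 h2. Qed.

Lemma absBle x y c : abs x <= c -> abs y <= c -> abs (x - y) <= c.
Proof. by move=> h1 h2; apply: absDle; rewrite ?absN. Qed.

Lemma absBlt x y c : abs x < c -> abs y < c -> abs (x - y) < c.
Proof. by move=> h1 h2; apply: absDlt; rewrite ?absN. Qed.

Lemma abs_sum_le (I : Type) (s : seq I) (P : pred I) (F : I -> K) c :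
  0 <= c -> (forall i, P i -> abs (F i) <= c) -> abs (\sum_(i <- s | P i) F i) <= c.
Proof.
move=> c0 h; elim/big_rec: _ => [|i x Pi hx]; first by rewrite abs_0.
by apply: absDle => //; apply: h.
Qed.

Lemma abs_sum_lt (I : Type) (s : seq I) (P : pred I) (F : I -> K) c :
  0 < c -> (forall i, P i -> abs (F i) < c) -> abs (\sum_(i <- s | P i) F i) < c.
Proof.
move=> c0 h; elim/big_rec: _ => [|i x Pi hx]; first by rewrite abs_0.
by apply: absDlt => //; apply: h.
Qed.

Lemma abs_strict x y : abs y < abs x -> abs (x + y) = abs x.
Proof.
move=> h; apply/eqP; rewrite eq_le; apply/andP; split.
  by apply: absDle => //; apply: ltW.
have e : x = (x + y) - y by rewrite addrK.
have := absD (x + y) (- y); rewrite -e absN.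
rewrite le_max => /orP [//|]; by rewrite leNgt h.
Qed.

Lemma abs_nat_le1 n : abs (n%:R) <= 1.
Proof.
elim: n => [|n IH]; first by rewrite abs_0.
by rewrite -addn1 natrD; apply: absDle => //; rewrite abs1.
Qed.

Lemma p_gt1 : (1 < p)%N. Proof. exact: prime_gt1. Qed.

Lemma P_gt1 : 1 < (p%:R : R).
Proof. by rewrite ltr1n p_gt1. Qed.

Lemma P_gt0 : 0 < (p%:R : R).
Proof. exact: lt_trans ltr01 P_gt1. Qed.

Lemma absp_lt1 : abs (p%:R) < 1.
Proof. by rewrite absp invf_lt1 ?P_gt0 // P_gt1. Qed.

Lemma abs_coprime m : coprime p m -> abs (m%:R) = 1.
Proof.
move=> cop.
have [a _ ha] := @Bezoutl p m (prime_gt0 hp).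
move: ha; rewrite (eqP cop) => /dvdnP [k hk].
have e : (1 : K) = (k * p)%:R - a%:R * m%:R by rewrite -hk natrD natrM addrK.
apply/eqP; rewrite eq_le abs_nat_le1 /=.
rewrite leNgt; apply/negP => hlt.
have : abs (1 : K) < 1.
  rewrite e; apply: absBlt.
    rewrite natrM absM; apply: le_lt_trans (ler_wpM2r (abs_ge0 _) (abs_nat_le1 k)) _.
    by rewrite mul1r absp_lt1.
  rewrite absM; apply: le_lt_trans (ler_wpM2r (abs_ge0 _) (abs_nat_le1 a)) _.
  by rewrite mul1r.
by rewrite abs1 ltxx.
Qed.


Local Notation P := (p%:R : R).

Lemma absfact_rec i :
  abs ((i`!)%:R) = (P^-1) ^+ (i %/ p) * abs (((i %/ p)`!)%:R).
Proof.
elim: i => [|i IH]; first by rewrite div0n mul1r.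
rewrite factS natrM absM IH divnS ?prime_gt0 //.
have [hd|hd] := boolP (p %| i.+1)%N.
  move: (hd) => /dvdnP [k hk].
  have hk' : k = (i %/ p).+1.
    have := divnS i (prime_gt0 hp); rewrite hd hk mulnK ?prime_gt0 //.
  rewrite hk natrM absM absp add1n -hk' hk' factS natrM absM exprS.
  by ring.
rewrite abs_coprime ?prime_coprime // mul1r add0n.
by [].
Qed.

Lemma fact_bound i : 1 <= abs ((i`!)%:R) ^+ p.-1 * P ^+ i.-1.
Proof.
elim/ltn_ind: i => i IH.
rewrite absfact_rec.
set m := (i %/ p)%N.
have [m0|mpos] := posnP m.
  rewrite m0 expr0 mul1r fact0 abs1 expr1n mul1r.
  by apply: exprn_ege1; apply: ltW; apply: P_gt1.
have hi : (0 < i)%N.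
  rewrite lt0n; apply/negP => /eqP i0; move: mpos; by rewrite /m i0 div0n.
have hmi : (m < i)%N by apply: ltn_Pdiv => //; apply: p_gt1.
have hIH := IH m hmi.
have hmp : (m * p <= i)%N by apply: leq_divM.
have hmmp : (m <= m * p)%N by apply: leq_pmulr; apply: prime_gt0.
have e : i.-1 = (m.-1 + (m * p - m) + (i - m * p))%N by lia.
have e2 : (m * p - m = m * p.-1)%N by rewrite -subn1 mulnBr muln1.
rewrite e e2 !exprD exprMn.
rewrite -!exprM mulnC.
have h1 : ((P^-1) ^+ (p.-1 * m)) * P ^+ (p.-1 * m) = 1.
  by rewrite -exprMn mulVf ?expr1n // gt_eqF // P_gt0.
have h2 : 1 <= P ^+ (i - m * p) by apply: exprn_ege1; apply: ltW; apply: P_gt1.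
set a := abs _ ^+ _; set b := P ^+ m.-1.
have -> : (P^-1) ^+ (p.-1 * m) * a * (b * P ^+ (p.-1 * m) * P ^+ (i - m * p))
   = (a * b) * P ^+ (i - m * p) * ((P^-1) ^+ (p.-1 * m) * P ^+ (p.-1 * m)).
  by ring.
rewrite h1 mulr1.
by apply: le_trans (ler_pM ler01 ler01 hIH h2); rewrite mulr1.
Qed.


Lemma pm1_gt0 : (0 < p.-1)%N.
Proof. by have := p_gt1; case: p => [|[|n]]. Qed.

Lemma pw_lt (a b : R) : 0 <= a -> 0 <= b -> a ^+ p.-1 < b ^+ p.-1 -> a < b.
Proof. by move=> ha hb; rewrite ltr_pXn2r ?nnegrE // pm1_gt0. Qed.

Lemma pw_le (a b : R) : 0 <= a -> 0 <= b -> a ^+ p.-1 <= b ^+ p.-1 -> a <= b.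
Proof. by move=> ha hb; rewrite ler_pXn2r ?nnegrE // pm1_gt0. Qed.

Lemma fact_abs_gt0 i : 0 < abs ((i`!)%:R).
Proof.
rewrite lt_neqAle abs_ge0 andbT; apply/negP => /eqP h.
have := fact_bound i; rewrite -h expr0n (negbTE (lt0n_neq0 pm1_gt0)) mul0r.
by rewrite ler10.
Qed.

Lemma fact_neq0 i : (i`!)%:R != 0 :> K.
Proof. apply/negP => /eqP h; have := fact_abs_gt0 i; by rewrite h abs_0 ltxx. Qed.

Lemma natS_neq0 n : (n.+1)%:R != 0 :> K.
Proof.
apply/negP => /eqP h; have := fact_neq0 n.+1; by rewrite factS natrM h mul0r eqxx.
Qed.

Lemma inv_fact_bound i : (abs ((i`!)%:R))^-1 ^+ p.-1 <= P ^+ i.-1.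
Proof.
rewrite exprVn -div1r ler_pdivrMr ?exprn_gt0 ?fact_abs_gt0 // mulrC; exact: fact_bound.
Qed.

Lemma abs_natS_ge_fact j : abs ((j.+1`!)%:R) <= abs ((j.+1)%:R).
Proof.
rewrite factS natrM absM -[X in _ <= X]mulr1; apply: ler_wpM2l; first exact: abs_ge0.
exact: abs_nat_le1.
Qed.

Lemma inv_nat_bound j : (abs ((j.+1)%:R))^-1 ^+ p.-1 <= P ^+ j.
Proof.
apply: le_trans (inv_fact_bound j.+1); apply: lerXn2r; rewrite ?nnegrE ?invr_ge0 ?abs_ge0 //.
rewrite lef_pV2 ?posrE ?fact_abs_gt0 //; last first.
  apply: lt_le_trans (fact_abs_gt0 j.+1) (abs_natS_ge_fact j).
exact: abs_natS_ge_fact.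
Qed.

Lemma conv_unique u L1 L2 : converges abs u L1 -> converges abs u L2 -> L1 = L2.
Proof.
move=> h1 h2; apply/eqP; rewrite -subr_eq0; apply/eqP/abs0.
apply/eqP; rewrite eq_le abs_ge0 andbT; apply/negP => /negP; rewrite -ltNge => hpos.
have [N1 hN1] := h1 _ hpos; have [N2 hN2] := h2 _ hpos.
have e : L1 - L2 = (u (maxn N1 N2) - L2) - (u (maxn N1 N2) - L1) by ring.
have : abs (L1 - L2) < abs (L1 - L2).
  by rewrite {1}e; apply: absBlt; [apply: hN2; rewrite leq_maxr | apply: hN1; rewrite leq_maxl].
by rewrite ltxx.
Qed.

Lemma klimE u L : converges abs u L -> klim abs u = L.
Proof.
move=> h; have h' : converges abs u (klim abs u).
  by rewrite /klim; apply: epsilon_spec; exists L.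
exact: conv_unique h' h.
Qed.

Lemma series_conv (a : nat -> K) :
  (forall e : R, 0 < e -> exists N, forall i, (N <= i)%N -> abs (a i) < e) ->
  exists L, converges abs (fun N => \sum_(i < N) a i) L.
Proof.
move=> h; apply: hcomplete => e he.
have [N hN] := h e he; exists N => m k hm hk.
wlog hmk : m k hm hk / (k <= m)%N.
  move=> W; have [|hkm] := leqP k m; first exact: W.
  by rewrite absB; apply: W => //; apply: ltnW.
rewrite -!(big_mkord xpredT) (big_cat_nat _ hmk) //= addrAC subrr add0r.
rewrite big_nat_cond; apply: abs_sum_lt => // i /andP [/andP [hki _] _]; apply: hN.
exact: leq_trans hk hki.
Qed.

Lemma conv_le u v L : converges abs v 0 ->
  (forall N, abs (u N - L) <= abs (v N)) -> converges abs u L.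
Proof.
move=> hv h e he; have [N hN] := hv e he; exists N => m hm.
by apply: le_lt_trans (h m) _; have := hN m hm; rewrite subr0.
Qed.

Lemma conv_mul u v A B : converges abs u A -> converges abs v B ->
  converges abs (fun N => u N * v N) (A * B).
Proof.
move=> hu hv e he.
set M := 1 + abs A + abs B.
have hM : 0 < M by rewrite /M -addrA ltr_wpDr // addr_ge0 // abs_ge0.
have he' : 0 < e / M by rewrite divr_gt0.
have [N1 h1] := hu _ he'; have [N2 h2] := hv _ (ltr01 : (0 : R) < 1).
have [N3 h3] := hv _ he'.
exists (maxn N1 (maxn N2 N3)) => m hm.
have hm1 : (N1 <= m)%N by apply: leq_trans hm; rewrite leq_maxl.
have hm2 : (N2 <= m)%N by apply: leq_trans hm; rewrite leq_max leq_maxl orbT.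
have hm3 : (N3 <= m)%N by apply: leq_trans hm; rewrite leq_max leq_maxr orbT.
have e1 : u m * v m - A * B = (u m - A) * v m + A * (v m - B) by ring.
have hvm : abs (v m) <= M.
  have -> : v m = (v m - B) + B by ring.
  apply: absDle.
    apply: le_trans (ltW (h2 m hm2)) _; have := abs_ge0 A; have := abs_ge0 B; rewrite /M; lra.
  have := abs_ge0 A; rewrite /M; lra.
have hA : abs A <= M by have := abs_ge0 B; rewrite /M; lra.
rewrite e1; apply: absDlt; rewrite absM.
  apply: (@le_lt_trans _ _ (abs (u m - A) * M)); first by apply: ler_wpM2l; rewrite ?abs_ge0.
  by rewrite -ltr_pdivlMr // h1.
rewrite mulrC; apply: (@le_lt_trans _ _ (abs (v m - B) * M)); first by apply: ler_wpM2l; rewrite ?abs_ge0.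
by rewrite -ltr_pdivlMr // h3.
Qed.


Variable q : K.
Hypothesis hq : abs (q - 1) ^+ p.-1 < P^-1.
Local Notation r := (abs (q - 1)).
Local Notation th := (abs (q - 1) ^+ p.-1 * P).

Lemma r_ge0 : 0 <= r. Proof. exact: abs_ge0. Qed.
Lemma th_ge0 : 0 <= th. Proof. by rewrite mulr_ge0 ?exprn_ge0 ?r_ge0 // ltW // P_gt0. Qed.
Lemma th_lt1 : th < 1.
Proof. by rewrite -ltr_pdivlMr ?P_gt0 // div1r. Qed.
Lemma th_le1 : th <= 1. Proof. exact: ltW th_lt1. Qed.
Lemma r_lt1 : r < 1.
Proof.
apply: pw_lt; rewrite ?r_ge0 ?ler01 // expr1n; apply: lt_trans hq _.
by rewrite invf_lt1 ?P_gt0 ?P_gt1.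
Qed.

Definition eN (z : K) (N : nat) := \sum_(i < N) z ^+ i / (i`!)%:R.

Lemma decay (a : nat -> K) (C : R) : 0 <= C ->
  (forall i, abs (a i) ^+ p.-1 <= C * th ^+ i) ->
  forall e : R, 0 < e -> exists N, forall i, (N <= i)%N -> abs (a i) < e.
Proof.
move=> C0 h e he.
have hC : 0 < C + 1 by lra.
have he' : 0 < e ^+ p.-1 / (C + 1) by rewrite divr_gt0 // exprn_gt0.
have [N hN] := @geo_small _ _ th_ge0 th_lt1 _ he'.
exists N => i hi; apply: pw_lt; rewrite ?abs_ge0 ?ltW //.
apply: le_lt_trans (h i) _.
have := hN i hi; rewrite ltr_pdivlMr // => h2.
apply: le_lt_trans h2; rewrite mulrC ler_wpM2l ?exprn_ge0 ?th_ge0 //; lra.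
Qed.

Lemma rfact_le1 i : r ^+ i.-1 * (abs ((i`!)%:R))^-1 <= 1.
Proof.
apply: pw_le; rewrite ?mulr_ge0 ?exprn_ge0 ?invr_ge0 ?abs_ge0 ?ler01 // expr1n.
rewrite exprMn -exprM mulnC exprM.
apply: (@le_trans _ _ (r ^+ p.-1 ^+ i.-1 * P ^+ i.-1)).
  by apply: ler_wpM2l; rewrite ?exprn_ge0 ?abs_ge0 ?inv_fact_bound.
rewrite -exprMn; apply: exprn_ile1; [exact: th_ge0 | exact: th_le1].
Qed.

Lemma exp_term_bound z i : abs z <= r ->
  abs (z ^+ i / (i`!)%:R) ^+ p.-1 <= th ^+ i.
Proof.
move=> hz; rewrite absM absX absV exprMn exprMn -exprM mulnC exprM.
apply: ler_pM; rewrite ?exprn_ge0 ?invr_ge0 ?abs_ge0 //.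
  by apply: lerXn2r; rewrite ?nnegrE ?exprn_ge0 ?abs_ge0 // lerXn2r ?nnegrE ?abs_ge0.
apply: le_trans (inv_fact_bound i) _.
by rewrite ler_eXn2l ?P_gt1 // leq_pred.
Qed.

Lemma exp_conv z : abs z <= r -> converges abs (eN z) (pexp abs z).
Proof.
move=> hz.
have hd : forall i, abs (z ^+ i / (i`!)%:R) ^+ p.-1 <= 1 * th ^+ i.
  by move=> i; rewrite mul1r; apply: exp_term_bound.
have [L hL] := series_conv _ (decay _ _ ler01 hd).
by rewrite /pexp (klimE _ _ hL).
Qed.

Lemma eN0 N : eN 0 N.+1 = 1.
Proof.
rewrite /eN big_ord_recl /= expr0 fact0 divr1 big1 ?addr0 // => i _.
by rewrite expr0n /= mul0r.
Qed.

Lemma pexp0 : pexp abs 0 = 1.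
Proof.
have h := exp_conv 0; rewrite abs_0 in h; have h' := h r_ge0.
apply: (conv_unique _ _ _ h') => e he; exists 1%N => m hm.
by case: m hm => // m _; rewrite eN0 subrr abs_0.
Qed.

Lemma exp_lip a b N : abs a <= r -> abs b <= r -> abs (eN a N - eN b N) <= abs (a - b).
Proof.
move=> ha hb; rewrite /eN -sumrB; apply: abs_sum_le; first exact: abs_ge0.
move=> i _; rewrite -mulrBl subrXX -mulrA absM -[X in _ <= X]mulr1.
apply: ler_wpM2l; first exact: abs_ge0.
rewrite absM absV; apply: le_trans (rfact_le1 i); apply: ler_wpM2r.
  by rewrite invr_ge0 abs_ge0.
apply: abs_sum_le; first by rewrite exprn_ge0 ?r_ge0.
move=> j _; rewrite absM !absX.
have hj : (i.-1 = (i.-1 - j) + j)%N by have := ltn_ord j; lia.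
rewrite {2}hj exprD; apply: ler_pM; rewrite ?exprn_ge0 ?abs_ge0 //; apply: lerXn2r; rewrite ?nnegrE ?abs_ge0 ?r_ge0 //.
Qed.

Lemma abs_sum_pw (I : Type) (s : seq I) (Q : pred I) (F : I -> K) c :
  0 <= c -> (forall i, Q i -> abs (F i) ^+ p.-1 <= c) ->
  abs (\sum_(i <- s | Q i) F i) ^+ p.-1 <= c.
Proof.
move=> c0 h; elim/big_rec: _ => [|i x Qi hx].
  by rewrite abs_0 expr0n (negbTE (lt0n_neq0 pm1_gt0)).
have := absD (F i) x; rewrite le_max => /orP [h1|h1].
  apply: le_trans (h i Qi); apply: lerXn2r; by rewrite ?nnegrE ?abs_ge0.
apply: le_trans hx; apply: lerXn2r; by rewrite ?nnegrE ?abs_ge0.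
Qed.

Lemma conv_near u v L : converges abs u L ->
  (forall e : R, 0 < e -> exists N, forall m, (N <= m)%N -> abs (v m - u m) < e) ->
  converges abs v L.
Proof.
move=> hu hv e he; have [N1 h1] := hu e he; have [N2 h2] := hv e he.
exists (maxn N1 N2) => m hm.
have -> : v m - L = (v m - u m) + (u m - L) by ring.
apply: absDlt; [apply: h2 | apply: h1]; apply: leq_trans hm; by rewrite ?leq_maxl ?leq_maxr.
Qed.

Section ExpAdd.
Variables a b : K.
Hypotheses (ha : abs a <= r) (hb : abs b <= r).
Let t i j := a ^+ i / (i`!)%:R * (b ^+ j / (j`!)%:R).

Lemma eN_prod N : eN a N * eN b N = \sum_(0 <= i < N) \sum_(0 <= j < N) t i j.
Proof.
rewrite /eN big_distrlr /= big_mkord; apply: eq_bigr => i _.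
by rewrite big_mkord.
Qed.

Lemma binom_term N i : (i <= N)%N ->
  b ^+ (N - i) * a ^+ i *+ 'C(N, i) / (N`!)%:R = t i (N - i).
Proof.
move=> hi; rewrite /t -[_ *+ 'C(N, i)]mulr_natr -(bin_fact hi) !natrM.
have h1 := fact_neq0 i; have h2 := fact_neq0 (N - i).
have h3 : ('C(N, i))%:R != 0 :> K.
  apply/negP => /eqP h; have := fact_neq0 N; by rewrite -(bin_fact hi) !natrM h mul0r eqxx.
by field; rewrite h1 h2 h3.
Qed.

Lemma eN_sum N : eN (a + b) N = \sum_(0 <= i < N) \sum_(0 <= j < N - i) t i j.
Proof.
elim: N => [|N IH]; first by rewrite /eN big_ord0 big_geq.
rewrite /eN big_ord_recr /= -/(eN (a + b) N) IH.
rewrite (@eq_big_nat _ _ _ 0 N.+1 _ (fun i => \sum_(0 <= j < N - i) t i j + t i (N - i))); last first.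
  move=> i /andP [_ hi]; rewrite subSn // big_nat_recr //.
have e1 : \sum_(0 <= i < N.+1) \sum_(0 <= j < N - i) t i j
        = \sum_(0 <= i < N) \sum_(0 <= j < N - i) t i j.
  by rewrite big_nat_recr //= subnn [X in _ + X]big_geq // addr0.
rewrite big_split /= e1; congr (_ + _).
rewrite addrC exprDn big_distrl /= [RHS]big_mkord; apply: eq_bigr => i _.
by rewrite binom_term // -ltnS.
Qed.

Lemma eN_diff_bound N :
  abs (eN a N * eN b N - eN (a + b) N) ^+ p.-1 <= th ^+ N.
Proof.
rewrite eN_prod eN_sum -sumrB.
apply: abs_sum_pw; first by rewrite exprn_ge0 ?th_ge0.
move=> i _; rewrite (big_cat_nat (leq0n (N - i)) (leq_subr i N)) /= addrAC subrr add0r.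
rewrite big_nat_cond; apply: abs_sum_pw; first by rewrite exprn_ge0 ?th_ge0.
move=> j /andP [/andP [hj _] _].
rewrite /t absM exprMn.
apply: (@le_trans _ _ (th ^+ i * th ^+ j)).
  apply: ler_pM; rewrite ?exprn_ge0 ?abs_ge0 //; exact: exp_term_bound.
rewrite -exprD; apply: ler_wiXn2l; rewrite ?th_ge0 ?th_le1 //; lia.
Qed.

End ExpAdd.

Lemma exp_add a b : abs a <= r -> abs b <= r -> pexp abs (a + b) = pexp abs a * pexp abs b.
Proof.
move=> ha hb.
have hab : abs (a + b) <= r by apply: absDle.
have h1 := conv_mul _ _ _ _ (exp_conv a ha) (exp_conv b hb).
have h2 : converges abs (fun N => eN a N * eN b N) (pexp abs (a + b)).
  apply: (conv_near _ _ _ (exp_conv _ hab)).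
  apply: (decay _ _ ler01) => N; rewrite mul1r; exact: eN_diff_bound.
exact: conv_unique _ _ _ h2 h1.
Qed.

Local Notation w := (q - 1).

Definition lN (N : nat) := \sum_(i < N) (-1) ^+ i * (q - 1) ^+ i.+1 / (i.+1)%:R.

Lemma log_term_bound i :
  abs ((-1) ^+ i * w ^+ i.+1 / (i.+1)%:R) ^+ p.-1 <= r ^+ p.-1 * th ^+ i.
Proof.
rewrite !absM !absX absN1 expr1n mul1r absV exprMn.
rewrite exprS exprMn -exprM mulnC exprM exprMn -mulrA.
apply: ler_wpM2l; first by rewrite exprn_ge0 ?r_ge0.
by apply: ler_wpM2l; rewrite ?exprn_ge0 ?exprn_ge0 ?r_ge0 ?inv_nat_bound.
Qed.

Lemma log_term_le i : abs ((-1) ^+ i * w ^+ i.+1 / (i.+1)%:R) <= r.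
Proof.
apply: pw_le; rewrite ?abs_ge0 ?r_ge0 //; apply: le_trans (log_term_bound i) _.
rewrite -[X in _ <= X]mulr1; apply: ler_wpM2l; first by rewrite exprn_ge0 ?r_ge0.
by apply: exprn_ile1; rewrite ?th_ge0 ?th_le1.
Qed.

Lemma lN_le N : abs (lN N) <= r.
Proof. by apply: abs_sum_le; rewrite ?r_ge0 // => i _; apply: log_term_le. Qed.

Lemma log_conv : converges abs lN (plog abs q).
Proof.
have hC : 0 <= r ^+ p.-1 by rewrite exprn_ge0 ?r_ge0.
have [L hL] := series_conv _ (decay _ _ hC log_term_bound).
by rewrite /plog (klimE _ _ hL).
Qed.

Lemma limit_le u L c : converges abs u L -> (forall N, abs (u N) <= c) -> abs L <= c.
Proof.
move=> hu hc; rewrite leNgt; apply/negP => hlt.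
have hc0 : 0 <= c by apply: le_trans (hc 0%N); exact: abs_ge0.
have he : 0 < abs L - c by rewrite subr_gt0.
have [N hN] := hu _ he.
have hN' := hN N (leqnn N).
have : abs L <= Num.max (abs (L - u N)) (abs (u N)).
  by have := absD (L - u N) (u N); rewrite subrK.
rewrite le_max => /orP [h|h].
  by move: hN'; rewrite absB => h2; have := le_lt_trans h h2; lra.
by have := le_trans h (hc N); lra.
Qed.

Lemma log_le : abs (plog abs q) <= r.
Proof. exact: limit_le log_conv lN_le. Qed.

Definition good (C : R) (P : {poly K}) :=
  forall k, abs (P`_k * w ^+ k) ^+ p.-1 <= C * th ^+ k.

Lemma good_mono C C' P : C <= C' -> good C P -> good C' P.
Proof.
move=> hCC h k; apply: le_trans (h k) _; apply: ler_wpM2r => //.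
by rewrite exprn_ge0 ?th_ge0.
Qed.

Lemma pw_add x y c : abs x ^+ p.-1 <= c -> abs y ^+ p.-1 <= c -> abs (x + y) ^+ p.-1 <= c.
Proof.
move=> hx hy; have := absD x y; rewrite le_max => /orP [h|h].
  apply: le_trans hx; apply: lerXn2r; by rewrite ?nnegrE ?abs_ge0.
apply: le_trans hy; apply: lerXn2r; by rewrite ?nnegrE ?abs_ge0.
Qed.

Lemma good_add C P Q : good C P -> good C Q -> good C (P + Q).
Proof. move=> hP hQ k; rewrite coefD mulrDl; exact: pw_add. Qed.

Lemma good_opp C P : good C P -> good C (- P).
Proof. move=> hP k; rewrite coefN mulNr absN; exact: hP. Qed.

Lemma good_sum (I : Type) (s : seq I) (Q : pred I) (F : I -> {poly K}) C :
  0 <= C -> (forall i, Q i -> good C (F i)) -> good C (\sum_(i <- s | Q i) F i).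
Proof.
move=> C0 h; elim/big_rec: _ => [|i x Qi hx].
  move=> k; rewrite coef0 mul0r abs_0 expr0n (negbTE (lt0n_neq0 pm1_gt0)).
  by rewrite mulr_ge0 ?exprn_ge0 ?th_ge0.
by apply: good_add => //; apply: h.
Qed.

Lemma good_scale C c P : good C P -> good (abs c ^+ p.-1 * C) (c *: P).
Proof.
move=> hP k; rewrite coefZ -mulrA absM exprMn -mulrA; apply: ler_wpM2l.
  by rewrite exprn_ge0 ?abs_ge0.
exact: hP.
Qed.

Lemma good_monomial C c n : 0 <= C -> abs (c * w ^+ n) ^+ p.-1 <= C * th ^+ n ->
  good C (c *: 'X^n).
Proof.
move=> C0 h k; rewrite coefZ coefXn.
have [->|hk] := eqVneq k n; first by rewrite mulr1.
rewrite mulr0 mul0r abs_0 expr0n (negbTE (lt0n_neq0 pm1_gt0)).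
by rewrite mulr_ge0 ?exprn_ge0 ?th_ge0.
Qed.

Lemma good_one : good 1 1.
Proof.
move=> [|k]; rewrite coef1 /=.
  by rewrite expr0 !mulr1 abs1 expr1n.
by rewrite !mul0r abs_0 expr0n (negbTE (lt0n_neq0 pm1_gt0)) mul1r exprn_ge0 ?th_ge0.
Qed.

Lemma good_X : good 1 'X.
Proof.
rewrite -['X]scale1r -['X]expr1; apply: good_monomial => //.
rewrite mul1r expr1 expr1 mul1r -[X in X <= _]mulr1; apply: ler_wpM2l.
  by rewrite exprn_ge0 ?r_ge0.
exact: ltW P_gt1.
Qed.

Lemma good_mul C1 C2 P Q : 0 <= C1 -> 0 <= C2 -> good C1 P -> good C2 Q -> good (C1 * C2) (P * Q).
Proof.
move=> h1 h2 hP hQ k; rewrite coefM big_distrl /=.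
apply: abs_sum_pw; first by rewrite !mulr_ge0 ?exprn_ge0 ?th_ge0.
move=> j _.
have ek : (j + (k - j) = k)%N by rewrite subnKC // -ltnS.
have ew : w ^+ k = w ^+ j * w ^+ (k - j) by rewrite -exprD ek.
have et : th ^+ k = th ^+ j * th ^+ (k - j) by rewrite -exprD ek.
have -> : P`_j * Q`_(k - j) * w ^+ k = (P`_j * w ^+ j) * (Q`_(k - j) * w ^+ (k - j)).
  by rewrite ew; ring.
rewrite absM exprMn et.
have -> : C1 * C2 * (th ^+ j * th ^+ (k - j)) = (C1 * th ^+ j) * (C2 * th ^+ (k - j)) by ring.
by apply: ler_pM; rewrite ?exprn_ge0 ?abs_ge0 ?hP ?hQ.
Qed.

Lemma good_exp C P n : 0 <= C -> good C P -> good (C ^+ n) (P ^+ n).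
Proof.
move=> C0 hP; elim: n => [|n IH]; first by rewrite !expr0; exact: good_one.
by rewrite !exprS; apply: good_mul; rewrite ?exprn_ge0.
Qed.

Lemma good_horner C g n : 0 <= C -> good C g -> (forall k, (k < n)%N -> g`_k = 0) ->
  abs g.[w] ^+ p.-1 <= C * th ^+ n.
Proof.
move=> C0 hg hz; rewrite horner_coef.
apply: abs_sum_pw; first by rewrite mulr_ge0 ?exprn_ge0 ?th_ge0.
move=> k _; have [hk|hk] := ltnP k n.
  rewrite hz // mul0r abs_0 expr0n (negbTE (lt0n_neq0 pm1_gt0)).
  by rewrite mulr_ge0 ?exprn_ge0 ?th_ge0.
apply: le_trans (hg k) _; apply: ler_wpM2l => //.
by apply: ler_wiXn2l; rewrite ?th_ge0 ?th_le1.
Qed.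

Definition lcoef (i : nat) : K := (-1) ^+ i / (i.+1)%:R.
Definition l0poly (N : nat) : {poly K} := \sum_(i < N) lcoef i *: 'X^i.
Definition lpoly (N : nat) : {poly K} := l0poly N * 'X.
Definition ccoef (i : nat) : K := ((i`!)%:R)^-1.
Definition hpolyA (l : {poly K}) (N : nat) : {poly K} := \sum_(i < N) ccoef i *: l ^+ i.

Lemma lpoly_horner N : (lpoly N).[w] = lN N.
Proof.
rewrite /lpoly hornerMX /l0poly horner_sum big_distrl /=; apply: eq_bigr => i _.
by rewrite hornerZ hornerXn /lcoef exprSr; ring.
Qed.

Lemma hpoly_horner l N x : (hpolyA l N).[x] = eN l.[x] N.
Proof.
rewrite /hpolyA horner_sum; apply: eq_bigr => i _.
by rewrite hornerZ horner_exp /ccoef mulrC.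
Qed.

Lemma lpoly_deriv N : (1 + 'X) * (lpoly N)^`() = 1 - (- 'X) ^+ N.
Proof.
have -> : (lpoly N)^`() = \sum_(i < N) (- 'X) ^+ i.
  rewrite /lpoly /l0poly big_distrl raddf_sum /=; apply: eq_bigr => i _.
  rewrite -scalerAl -exprSr derivZ derivXn /= -scaler_nat scalerA /lcoef.
  rewrite divfK ?natS_neq0 // [RHS]exprNn -mul_polyC rmorphXn /= rmorphN1.
  by [].
have := subrXX (1 : {poly K}) (- 'X) N; rewrite expr1n opprK => ->.
by congr (_ * _); apply: eq_bigr => i _; rewrite expr1n mul1r.
Qed.

Lemma hpoly_deriv l N : (hpolyA l N.+1)^`() = l^`() * hpolyA l N.
Proof.
rewrite /hpolyA raddf_sum big_ord_recl /= derivZ deriv_exp mulr0n scaler0 add0r.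
rewrite mulr_sumr; apply: eq_bigr => i _.
rewrite derivZ deriv_exp /bump /= add0n -scaler_nat scalerA scalerAr; congr (_ * (_ *: _)).
rewrite /ccoef factS natrM invfM mulrAC mulVf ?natS_neq0 //.
by rewrite mul1r.
Qed.

Lemma hpolyS l N : hpolyA l N.+1 = hpolyA l N + ccoef N *: l ^+ N.
Proof. by rewrite /hpolyA big_ord_recr. Qed.

Lemma lpoly_pow_coef N n k : (k < n)%N -> ((lpoly N) ^+ n)`_k = 0.
Proof.
move=> hk; rewrite /lpoly exprMn mulrC coefXnM.
by rewrite hk.
Qed.

Lemma hpoly_coef0 N' N : (hpolyA (lpoly N') N.+1)`_0 = 1.
Proof.
by rewrite -horner_coef0 hpoly_horner /lpoly hornerMX mulr0 eN0.
Qed.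

Lemma hpoly_coef M k : (k <= M.+1)%N -> (hpolyA (lpoly M.+2) M.+2)`_k = (k <= 1)%N%:R.
Proof.
set l := lpoly M.+2; set h := hpolyA l M.+2.
set H := h - ccoef M.+1 *: l ^+ M.+1.
have eH : hpolyA l M.+1 = H by rewrite /H /h (hpolyS l M.+1) addrK.
have eq1 : (1 + 'X) * h^`() = (1 - (- 'X) ^+ M.+2) * H.
  by rewrite /h hpoly_deriv eH mulrA lpoly_deriv.
have key : forall j, (j <= M)%N -> h`_j.+1 *+ j.+1 + (if j == 0%N then 0 else h`_j *+ j) = h`_j.
  move=> j hj.
  have := congr1 (fun P : {poly K} => P`_j) eq1 => /=.
  rewrite mulrDl mul1r coefD coef_deriv coefXM.
  have -> : (if j == 0%N then 0 else h^`()`_j.-1) = (if j == 0%N then 0 else h`_j *+ j).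
    by case: j hj => [|j] hj //=; rewrite coef_deriv.
  move=> ->.
  rewrite mulrBl mul1r coefB exprNn -mulrA -signr_odd.
  have -> : ((-1) ^+ odd M.+2 * ('X ^+ M.+2 * H))`_j = 0.
    by case: (odd M.+2); rewrite ?expr0 ?expr1 ?mul1r ?mulN1r ?coefN -?exprM // coefXnM ifT ?oppr0 //; lia.
  rewrite subr0 /H coefB coefZ lpoly_pow_coef ?mulr0 ?subr0 //; lia.
elim: k => [|k IH] hk; first by rewrite /h /l hpoly_coef0.
have hk' : (k <= M)%N by lia.
have := key k hk'; rewrite IH; last by lia.
have hz : forall n, h`_n.+1 *+ n.+1 = 0 -> h`_n.+1 = 0.
  move=> n /eqP; rewrite -mulr_natr mulf_eq0 (negbTE (natS_neq0 _)) orbF => /eqP //.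
case: k {IH hk hk'} => [|k] /= h2.
  by rewrite -h2 addr0 mulr1n.
case: k h2 => [|k] /= h2.
  by apply: hz; move: h2 => /(congr1 (fun x => x - 1)); rewrite mulr1n addrK subrr.
by apply: hz; move: h2; rewrite mul0rn addr0.
Qed.

Lemma P_neq0 : (P : R) != 0. Proof. by rewrite gt_eqF // P_gt0. Qed.

Lemma good_lpoly N : good (P^-1) (lpoly N).
Proof.
have -> : lpoly N = \sum_(i < N) lcoef i *: 'X^(i.+1).
  rewrite /lpoly /l0poly big_distrl; apply: eq_bigr => i _ /=; by rewrite -scalerAl -exprSr.
apply: good_sum; first by rewrite invr_ge0 ltW // P_gt0.
move=> i _; apply: good_monomial; first by rewrite invr_ge0 ltW // P_gt0.
have -> : lcoef i * w ^+ i.+1 = (-1) ^+ i * w ^+ i.+1 / (i.+1)%:R by rewrite /lcoef; ring.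
apply: le_trans (log_term_bound i) _.
rewrite exprS; have hP := P_neq0.
have -> : P^-1 * (r ^+ p.-1 * P * th ^+ i) = r ^+ p.-1 * th ^+ i by field.
by [].
Qed.

Lemma good_h N : good 1 (hpolyA (lpoly N) N).
Proof.
apply: good_sum => // i _.
have hP0 : 0 <= (P^-1 : R) by rewrite invr_ge0 ltW // P_gt0.
have := good_scale _ (ccoef i) _ (good_exp _ _ i hP0 (good_lpoly N)).
apply: good_mono.
rewrite /ccoef absV.
apply: (@le_trans _ _ (P ^+ i * P^-1 ^+ i)).
  apply: ler_wpM2r; first by rewrite exprn_ge0.
  apply: le_trans (inv_fact_bound i) _.
  by rewrite ler_eXn2l ?P_gt1 // leq_pred.
by rewrite -exprMn mulfV ?P_neq0 // expr1n.
Qed.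

Lemma exp_log : pexp abs (plog abs q) = q.
Proof.
set L := plog abs q.
apply/eqP; rewrite -subr_eq0; apply/eqP/abs0.
apply/eqP; rewrite eq_le abs_ge0 andbT; apply/negP => /negP; rewrite -ltNge => hpos.
set e := abs (pexp abs L - q).
have [N1 h1] := exp_conv L log_le _ hpos.
have [N2 h2] := log_conv _ hpos.
have he : 0 < e ^+ p.-1 by rewrite exprn_gt0.
have [N3 h3] := @geo_small _ _ th_ge0 th_lt1 _ he.
set M := maxn N1 (maxn N2 N3).
set N := M.+2.
have hN1 : (N1 <= N)%N by rewrite /N /M; lia.
have hN2 : (N2 <= N)%N by rewrite /N /M; lia.
have hN3 : (N3 <= M.+1)%N by rewrite /M; lia.
set h := hpolyA (lpoly N) N.
set g := h - (1 + 'X).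
have gz : forall k, (k < M.+1)%N -> g`_k = 0.
  move=> k hk; rewrite /g coefB coefD coef1 coefX hpoly_coef; last by lia.
  by case: k hk => [|[|k]] hk /=; rewrite ?addr0 ?add0r ?subrr ?oppr0.
have gg : good 1 g.
  by apply: good_add; [exact: good_h | apply: good_opp; apply: good_add; [exact: good_one | exact: good_X]].
have hg := good_horner _ _ _ ler01 gg gz.
rewrite mul1r in hg.
have hg' : abs g.[w] < e.
  by apply: pw_lt; rewrite ?abs_ge0 //; apply: le_lt_trans hg (h3 _ hN3).
have eg : g.[w] = eN (lN N) N - q.
  rewrite /g /h hornerD hornerN hornerD hornerX hornerC hpoly_horner lpoly_horner.
  congr (_ - _); ring.
have ed : pexp abs L - q = (pexp abs L - eN L N) + (eN L N - eN (lN N) N) + g.[w].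
  rewrite eg; ring.
have : e < e.
  rewrite {1}/e ed; apply: absDlt; last exact: hg'.
  apply: absDlt; first by rewrite absB; apply: h1.
  apply: le_lt_trans (exp_lip _ _ _ log_le (lN_le N)) _.
  by rewrite absB; apply: h2.
by rewrite ltxx.
Qed.

Hypothesis hodd : odd p.

Lemma abs2 : abs (2 : K) = 1.
Proof.
apply: abs_coprime; rewrite prime_coprime //; apply/negP => hd.
have := dvdn_leq (isT : (0 < 2)%N) hd; have := p_gt1 => h1 h2.
have hp2 : p = 2%N by lia.
by move: hodd; rewrite hp2.
Qed.

Lemma abs_padic x : is_padic_int abs x -> abs x <= 1.
Proof.
move=> hx; have [z hz] := hx 1 ltr01.
have hz1 : abs (z%:~R : K) <= 1.
  case: z hz => n _.
    exact: abs_nat_le1 n.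
  have := abs_nat_le1 n.+1; rewrite -absN => h; exact: h.
have -> : x = (x - z%:~R) + z%:~R by rewrite subrK.
by apply: absDle => //; apply: ltW.
Qed.

Local Notation L := (plog abs q).

Lemma absL_mul t : abs t <= 1 -> abs (t * L) <= r.
Proof.
move=> ht; rewrite absM -[X in _ <= X]mul1r; apply: ler_pM; rewrite ?abs_ge0 //.
exact: log_le.
Qed.

Lemma qpow_nat m : qpow abs q (m%:R) = q ^+ m.
Proof.
elim: m => [|m IH]; first by rewrite /qpow mul0r pexp0 expr0.
rewrite /qpow -natr1 mulrDl mul1r exp_add; last exact: log_le.
  by rewrite exp_log -/(qpow abs q m%:R) IH exprSr.
exact: absL_mul (abs_nat_le1 m).
Qed.

Lemma qpow_add_nat t m : abs t <= 1 -> qpow abs q (t + m%:R) = qpow abs q t * q ^+ m.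
Proof.
move=> ht; rewrite /qpow mulrDl exp_add ?absL_mul ?abs_nat_le1 //.
by rewrite -/(qpow abs q m%:R) qpow_nat.
Qed.

Lemma qpow_exp t k : abs t <= 1 -> qpow abs q t ^+ k = qpow abs q (t * k%:R).
Proof.
move=> ht; elim: k => [|k IH]; first by rewrite expr0 mulr0 /qpow mul0r pexp0.
have htk : abs (t * k%:R) <= 1.
  by rewrite absM -[X in _ <= X]mul1r; apply: ler_pM; rewrite ?abs_ge0 ?abs_nat_le1.
rewrite exprSr IH /qpow -exp_add ?absL_mul //.
by congr (pexp abs _); rewrite -natr1; ring.
Qed.

Lemma abs_near1 t : abs (t - 1) < 1 -> abs t = 1.
Proof.
move=> h; have -> : t = 1 + (t - 1) by rewrite addrC subrK.
by rewrite abs_strict abs1.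
Qed.

Lemma abs_1p t : abs (t - 1) < 1 -> abs (1 + t) = 1.
Proof.
move=> h; have -> : 1 + t = 2 + (t - 1) by ring.
by rewrite abs_strict abs2.
Qed.

Lemma powm1_le t m : abs (t - 1) < 1 -> abs (t ^+ m - 1) <= abs (t - 1).
Proof.
move=> h; have := subrXX t 1 m; rewrite expr1n => ->.
rewrite absM -[X in _ <= X]mulr1; apply: ler_wpM2l; first exact: abs_ge0.
apply: abs_sum_le => // i _; by rewrite expr1n mulr1 absX abs_near1 // expr1n.
Qed.

Lemma pow_p_close t : abs (t - 1) <= r -> abs (t ^+ p - 1) <= abs (t - 1) / P.
Proof.
move=> ht; set d := t - 1.
have hd1 : abs d < 1 by apply: le_lt_trans ht r_lt1.
have -> : t = 1 + d by rewrite /d addrC subrK.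
rewrite exprDn big_ord_recl /= expr0 mulr1 bin0 mulr1n expr1n addrAC subrr add0r.
apply: abs_sum_le; first by rewrite divr_ge0 ?abs_ge0 // ltW // P_gt0.
move=> i _; rewrite /bump /= add1n expr1n mul1r.
have hdi : abs (d ^+ i.+1) <= abs d.
  rewrite absX exprS -[X in _ <= X]mulr1; apply: ler_wpM2l; first exact: abs_ge0.
  by apply: exprn_ile1; rewrite ?abs_ge0 // ltW.
have [hip|hip] := ltnP i.+1 p.
  have hdv : (p %| 'C(p, i.+1))%N by apply: prime_dvd_bin => //; apply/andP; split.
  rewrite -mulr_natr absM; move: hdv => /dvdnP [c ->]; rewrite natrM absM absp.
  rewrite mulrA; apply: ler_wpM2r; first by rewrite invr_ge0 ltW // P_gt0.
  rewrite -[X in _ <= X]mulr1; apply: ler_pM; rewrite ?abs_ge0 //.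
  exact: abs_nat_le1.
have hi : i.+1 = p by have := ltn_ord i; lia.
rewrite hi binn mulr1n absX.
have e : abs d ^+ p = abs d * abs d ^+ p.-1 by rewrite -exprS prednK // prime_gt0.
have hp1 : abs d ^+ p.-1 <= P^-1.
  apply: ltW; apply: le_lt_trans hq; apply: lerXn2r; by rewrite ?nnegrE ?abs_ge0.
by rewrite e ler_wpM2l ?abs_ge0.
Qed.

Lemma T_close N : abs (q ^+ (p ^ N) - 1) <= r / P ^+ N.
Proof.
elim: N => [|N IH]; first by rewrite expn0 expr1 expr0 divr1.
have hPN : 1 <= P ^+ N by apply: exprn_ege1; apply: ltW; apply: P_gt1.
have hle : abs (q ^+ (p ^ N) - 1) <= r.
  apply: le_trans IH _; rewrite ler_pdivrMr ?exprn_gt0 ?P_gt0 //.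
  by rewrite -[X in X <= _]mulr1 ler_wpM2l ?r_ge0.
rewrite expnSr exprM.
apply: le_trans (pow_p_close _ hle) _.
rewrite exprSr invfM mulrA; apply: ler_wpM2r; first by rewrite invr_ge0 ltW // P_gt0.
exact: IH.
Qed.

Lemma abs_sum_tri (I : Type) (s : seq I) (F : I -> K) :
  abs (\sum_(i <- s) F i) <= \sum_(i <- s) abs (F i).
Proof.
elim/big_rec2: _ => [|i z y _ hz]; first by rewrite abs_0.
apply: le_trans (absD _ _) _; rewrite ge_max; apply/andP; split.
  have : 0 <= z by apply: le_trans hz; apply: abs_ge0.
  by move=> h; rewrite lerDl.
by apply: le_trans hz _; rewrite lerDr abs_ge0.
Qed.

Variable n : nat.
Variable x : K.
Hypothesis hx : abs x <= 1.

Definition ak (k : nat) : K :=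
  (1 - q)^-1 ^+ n * 'C(n, k)%:R * (-1) ^+ k * qpow abs q (x * k%:R).

Lemma q_near1 j : abs (q ^+ j - 1) < 1.
Proof. by apply: le_lt_trans (powm1_le _ j _) _; exact: r_lt1. Qed.

Lemma onep_neq0 t : abs (t - 1) < 1 -> 1 + t != 0.
Proof.
move=> h; apply/negP => /eqP h0; have := abs_1p _ h; rewrite h0 abs_0 => /eqP.
by rewrite eq_sym oner_eq0.
Qed.

Lemma geom (z : K) M : 1 - z != 0 -> \sum_(y < M) z ^+ y = (1 - z ^+ M) / (1 - z).
Proof.
move=> hz; have := subrXX 1 z M; rewrite expr1n => ->.
rewrite mulrAC divff // mul1r; apply: eq_bigr => i _; by rewrite expr1n mul1r.
Qed.

Lemma stepA y : qbr abs q (x + y%:R) ^+ n * (- q) ^+ y =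
  \sum_(k < n.+1) ak k * (- q ^+ k.+1) ^+ y.
Proof.
rewrite /qbr qpow_add_nat // exprMn.
rewrite exprDn.
rewrite !big_distrl /=; apply: eq_bigr => k _.
rewrite expr1n mul1r exprNn exprMn qpow_exp // /ak.
rewrite [(- q) ^+ y]exprNn [(- q ^+ k.+1) ^+ y]exprNn -!exprM mulSn exprD.
rewrite -mulr_natr [(y * k)%N]mulnC; ring.
Qed.

Lemma fsum_eq N :
  fsum abs p q n x N = (1 + q) / (1 + q ^+ (p ^ N)) *
     \sum_(k < n.+1) ak k * ((1 + (q ^+ (p ^ N)) ^+ k.+1) / (1 + q ^+ k.+1)).
Proof.
set M := (p ^ N)%N; set T := q ^+ M.
have oM : odd M by rewrite /M oddX hodd orbT.
have hsign : forall t : K, (- t) ^+ M = - t ^+ M.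
  by move=> t; rewrite exprNn -signr_odd oM expr1 mulN1r.
rewrite /fsum /mqbr -/M hsign opprK invf_div.
congr (_ * _).
under eq_bigr => y _ do rewrite stepA.
rewrite exchange_big /=; apply: eq_bigr => k _.
rewrite -mulr_sumr geom; last first.
  by rewrite opprK onep_neq0 // q_near1.
by rewrite hsign !opprK -exprM mulnC exprM.
Qed.

Definition Vx := (1 + q) * (1 - q)^-1 ^+ n *
  \sum_(k < n.+1) 'C(n, k)%:R * (-1) ^+ k * qpow abs q (x * k%:R) / (1 + q ^+ k.+1).

Lemma diff_eq N : let T := q ^+ (p ^ N) in
  fsum abs p q n x N - Vx =
  (1 + q) * \sum_(k < n.+1) (ak k / (1 + q ^+ k.+1)) * ((1 + T ^+ k.+1) / (1 + T) - 1).
Proof.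
move=> T; rewrite fsum_eq /Vx -/T -mulrA !mulr_sumr -sumrB.
apply: eq_bigr => k _; rewrite /ak; ring.
Qed.

Lemma d_bound T j : abs (T - 1) < 1 -> abs ((1 + T ^+ j.+1) / (1 + T) - 1) <= abs (T - 1).
Proof.
move=> hT; have hT0 := onep_neq0 _ hT.
have -> : (1 + T ^+ j.+1) / (1 + T) - 1 = T * (T ^+ j - 1) / (1 + T).
  by rewrite exprS; field.
rewrite absM absV abs_1p // invr1 mulr1 absM abs_near1 // mul1r.
exact: powm1_le.
Qed.

Lemma conv_main : converges abs (fsum abs p q n x) Vx.
Proof.
set B := abs (1 + q) * \sum_(k < n.+1) abs (ak k / (1 + q ^+ k.+1)).
have hB : 0 <= B by rewrite mulr_ge0 ?abs_ge0 // sumr_ge0 // => k _; rewrite abs_ge0.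
have key : forall N, abs (fsum abs p q n x N - Vx) <= B * abs (q ^+ (p ^ N) - 1).
  move=> N; rewrite diff_eq absM /B -mulrA; apply: ler_wpM2l; first exact: abs_ge0.
  apply: le_trans (abs_sum_tri _ _ _) _; rewrite mulr_suml; apply: ler_sum => k _.
  rewrite absM; apply: ler_wpM2l; first exact: abs_ge0.
  apply: d_bound; exact: q_near1.
move=> e he.
set N0 := (Num.truncn (B * r / e)).+1.
exists N0 => m hm.
apply: le_lt_trans (key m) _.
have hPm : 0 < P ^+ m by rewrite exprn_gt0 ?P_gt0.
apply: (@le_lt_trans _ _ (B * (r / P ^+ m))).
  by apply: ler_wpM2l => //; apply: T_close.
have h1 : B * r / e < N0%:R by apply: truncnS_gt.
have h2 : (N0%:R : R) <= P ^+ m.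
  rewrite -natrX ler_nat; apply: leq_trans hm _; apply: ltnW; apply: ltn_expl; exact: p_gt1.
have h3 : B * r / e < P ^+ m by apply: lt_le_trans h1 h2.
move: h3; rewrite ltr_pdivrMr // => h3.
by rewrite mulrA ltr_pdivrMr // (mulrC e).
Qed.
End Basic.

Theorem mainTheorem1
  (R : realType) (K : closedFieldType) (abs : K -> R) (p : nat)
  (hp : prime p) (hodd : odd p)
  (abs0 : forall x : K, abs x = 0 <-> x = 0)
  (absM : forall x y : K, abs (x * y) = abs x * abs y)
  (absD : forall x y : K, abs (x + y) <= Num.max (abs x) (abs y))
  (hcomplete : forall u : nat -> K, cauchy_seq abs u -> exists L, converges abs u L)
  (absp : abs (p%:R) = (p%:R)^-1)
  (q : K) (hq : abs (q - 1) ^+ (p - 1) < (p%:R)^-1) (hq1 : q != 1)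
  (n : nat) (x : K) (hx : is_padic_int abs x) :
  converges abs (fsum abs p q n x)
    ((1 + q) * (1 - q)^-1 ^+ n *
       \sum_(k < n.+1) 'C(n, k)%:R * (-1) ^+ k * qpow abs q (x * k%:R)
                        / (1 + q ^+ k.+1))
  /\
  converges abs (fsum abs p q n 0)
    ((1 + q) * (1 - q)^-1 ^+ n *
       \sum_(l < n.+1) 'C(n, l)%:R * (-1) ^+ l / (1 + q ^+ l.+1)).
Proof.
have hq' : abs (q - 1) ^+ p.-1 < (p%:R : R)^-1 by rewrite -subn1.
have hx1 := abs_padic _ _ _ abs0 absM absD _ hx.
split.
  exact: (conv_main _ _ _ _ hp abs0 absM absD absp hcomplete _ hq' hodd n _ hx1).
have h00 : abs (0 : K) <= 1 by rewrite (proj2 (abs0 0) erefl) ler01.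
have h := conv_main _ _ _ _ hp abs0 absM absD absp hcomplete _ hq' hodd n _ h00.
rewrite /Vx in h.
have e : forall k : 'I_n.+1, 'C(n, k)%:R * (-1) ^+ k * qpow abs q (0 * k%:R) / (1 + q ^+ k.+1)
   = 'C(n, k)%:R * (-1) ^+ k / (1 + q ^+ k.+1).
  move=> k; rewrite mul0r /qpow mul0r.
  by rewrite (pexp0 _ _ _ _ hp abs0 absM absD absp hcomplete _ hq') mulr1.
have eS : \sum_(k < n.+1) 'C(n, k)%:R * (-1) ^+ k * qpow abs q (0 * k%:R) / (1 + q ^+ k.+1)
   = \sum_(k < n.+1) 'C(n, k)%:R * (-1) ^+ k / (1 + q ^+ k.+1).
  by apply: eq_bigr => k _; exact: e.
by rewrite eS in h.
Qed.
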